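(* Let $G$ be a flattened grammar and $\mathrm{CPS}(G)$ its CPS transformation (with respect to an arbitrary fixed choice of CPS-triggering nonterminals). Then: (1) For every symbol $X$ of $G$ and every terminal string $\lambda\in\Sigma^*$, if $X\Rightarrow^*\lambda$ in $G$ in $n$ steps, then $\hat X\Rightarrow^*\lambda\,\tau_X$ in $\mathrm{CPS}(G)$ in $n$ steps. (2) For every dotted production $\Pi = X\to\alpha_1\cdots\alpha_{i-1}\cdot\alpha_i\cdots\alpha_r$ of $G$ and every $\lambda\in\Sigma^*$, if $\alpha_i\cdots\alpha_r\Rightarrow^*\lambda$ in $G$ in $n$ steps, then $\tau_\Pi\Rightarrow^*\lambda\,\tau_X$ in $\mathrm{CPS}(G)$ in $n$ steps.
   Context: BNF grammars and flattening. A BNF grammar over terminals $\Sigma$ is a list of rules $X\to e$, where $X$ is a nonterminal (called top-level) and $e$ is an expression: a single symbol; a concatenation $e_1\cdots e_n$ ($n\ge 0$, the case $n=0$ being $\varepsilon$); an alternation $e_1\mid\cdots\mid e_n$; an optional $e_1?$; or a repetition $e_1^*$. The procedure $\mathrm{Flatten}(X,e)$ emits context-free productions: (i) if $e=\alpha$ is a single symbol, emit $X\to\alpha$; (ii) if $e=e_1\cdots e_n$, for each $i$ let $\alpha_i=e_i$ if $e_i$ is a single symbol, and otherwise let $\alpha_i$ be a fresh nonterminal and call $\mathrm{Flatten}(\alpha_i,e_i)$; emit $X\to\alpha_1\cdots\alpha_n$; (iii) if $e=e_1\mid\cdots\mid e_n$, call $\mathrm{Flatten}(X,e_i)$ for each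 $i$; (iv) if $e=e_1?$, call $\mathrm{Flatten}(X,e_1\mid\varepsilon)$; (v) if $e=e_1^*$, let $\alpha$ be fresh, call $\mathrm{Flatten}(\alpha,e_1)$ and emit $X\to\alpha X$ and $X\to\varepsilon$. The flattened grammar $G$ consists of all productions emitted by $\mathrm{Flatten}(X,e)$ over all rules $X\to e$; its start symbol $S$ is a top-level nonterminal. CPS transformation. A nonterminal is CPS-eligible if it was created as a fresh symbol during flattening. Fix an arbitrary subset of the CPS-eligible nonterminals, called CPS-triggering (terminals and top-level nonterminals are never CPS-triggering). For every nonterminal $Y$ let $\hat Y$ be a new symbol; for a terminal $\sigma$ set $\hat\sigma=\sigma$. Define mutually recursive procedures. $\mathrm{CPSProd}(X\to\alpha_1\cdots\alpha_i\cdot\alpha_{i+1}\cdots\alpha_r,\ \tau)$, where $\tau$ is a string of symbols: if $i=0$, add the production $\hat X\to\tau$ to $\mathrm{CPS}(G)$; if $i>0$ and $\alpha_i$ is not CPS-triggering, call $\mathrm{CPSProd}(X\to\alpha_1\cdots\alpha_{i-1}\cdot\alpha_i\cdots\alpha_r,\ \hat\alpha_i\tau)$; if $i>0$, $\alpha_i$ is CPS-triggering, $i=r$ and $X=\alpha_r$ (i.e. the dotted production has the form $\alpha\to\gamma\alpha\,\cdot$), call $\mathrm{CPSProd}(X\to\alpha_1\cdots\alpha_{r-1}\cdot\alpha_r,\ \hat\alpha_r)$; otherwise ($\alpha_i$ CPS-triggering, not of that form) call $\mathrm{CPSSym}(\alpha_i,\tau)$ and then $\mathrm{CPSProd}(X\to\alpha_1\cdots\alpha_{i-1}\cdot\alpha_i\cdots\alpha_r,\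 \hat\alpha_i)$. $\mathrm{CPSSym}(X,\tau)$: for each production $X\to\eta$ of $G$, call $\mathrm{CPSProd}(X\to\eta\,\cdot,\ \tau)$. The grammar $\mathrm{CPS}(G)$ consists of all productions added when $\mathrm{CPSSym}(X,\varepsilon)$ is called for every non-CPS-triggering nonterminal $X$; its start symbol is $\hat S$. Tail contexts. During this transformation $\mathrm{CPSSym}(X,\cdot)$ is invoked exactly once for each nonterminal $X$, and $\mathrm{CPSProd}(\Pi,\cdot)$ exactly once for each dotted production $\Pi$ of $G$. For a nonterminal $X$, $\tau_X$ denotes the second argument of that invocation of $\mathrm{CPSSym}(X,\cdot)$; for a terminal $X$, $\tau_X=\varepsilon$. For a dotted production $\Pi$, $\tau_\Pi$ is the second argument of the invocation $\mathrm{CPSProd}(\Pi,\cdot)$. ''$A\Rightarrow^* w$ in $n$ steps'' means there is a derivation from $A$ to $w$ using exactly $n$ production applications. *)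

(* Defs.v *)
From Stdlib Require Import List.
Import ListNotations.
Set Implicit Arguments.

Inductive sym (T N : Type) : Type :=
| Term (t : T)
| NT (A : N).
Arguments Term {T N} t.
Arguments NT {T N} A.

Inductive step {T N : Type} (P : N -> list (sym T N) -> Prop)
  : list (sym T N) -> list (sym T N) -> Prop :=
| Step (u v : list (sym T N)) (A : N) (beta : list (sym T N)) :
    P A beta -> step P (u ++ NT A :: v) (u ++ beta ++ v).

Inductive derivesn {T N : Type} (P : N -> list (sym T N) -> Prop)
  : nat -> list (sym T N) -> list (sym T N) -> Prop :=
| derives0 (w : list (sym T N)) : derivesn P 0 w w
| derivesS (n : nat) (u v w : list (sym T N)) :
    step P u v -> derivesn P n v w -> derivesn P (S n) u w.

Definition prods_of {T N : Type} (G : list (N * list (sym T N)))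
  : N -> list (sym T N) -> Prop := fun A beta => In (A, beta) G.

(* BNF expressions: symbol, concatenation (n >= 0; n = 0 is epsilon),
   alternation, optional, repetition. *)
Inductive expr (T N : Type) : Type :=
| ESym (s : sym T N)
| ECat (es : list (expr T N))
| EAlt (es : list (expr T N))
| EOpt (e : expr T N)
| EStar (e : expr T N).
Arguments ESym {T N} s.
Arguments ECat {T N} es.
Arguments EAlt {T N} es.
Arguments EOpt {T N} e.
Arguments EStar {T N} e.

(* Nonterminals of the flattened grammar: top-level ones, and fresh ones
   created during flattening (numbered by a global counter). *)
Inductive fnt (N : Type) : Type :=
| Top (x : N)
| Fresh (k : nat).
Arguments Top {N} x.
Arguments Fresh {N} k.

Section Flatten.
Variables (T N : Type).

Definition fsym := sym T (fnt N).
Definition fprod := (fnt N * list fsym)%type.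

Definition liftS (s : sym T N) : fsym :=
  match s with Term t => Term t | NT x => NT (Top x) end.

(* flatten X e k = (productions emitted by Flatten(X,e), next fresh index),
   fresh nonterminals being Fresh k, Fresh (k+1), ... *)
Fixpoint flatten (X : fnt N) (e : expr T N) (k : nat) {struct e}
  : list fprod * nat :=
  match e with
  | ESym s => ([(X, [liftS s])], k)
  | ECat es =>
      let fix go (es : list (expr T N)) (k : nat)
          : list fsym * list fprod * nat :=
        match es with
        | [] => ([], [], k)
        | e1 :: es' =>
            match e1 with
            | ESym s =>
                let '(al, ps, k') := go es' k in (liftS s :: al, ps, k')
            | _ =>
                let '(ps1, k1) := flatten (Fresh k) e1 (S k) in
                let '(al, ps, k') := go es' k1 in
                (NT (Fresh k) :: al, ps1 ++ ps, k')
            end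
        end in
      let '(al, ps, k') := go es k in (ps ++ [(X, al)], k')
  | EAlt es =>
      let fix go (es : list (expr T N)) (k : nat) : list fprod * nat :=
        match es with
        | [] => ([], k)
        | e1 :: es' =>
            let '(ps1, k1) := flatten X e1 k in
            let '(ps, k') := go es' k1 in (ps1 ++ ps, k')
        end in
      go es k
  | EOpt e1 =>
      (* Flatten(X, e1 | eps) = Flatten(X, e1) followed by Flatten(X, eps),
         the latter emitting X -> eps (written out to keep recursion structural) *)
      let '(ps, k') := flatten X e1 k in (ps ++ [(X, [])], k')
  | EStar e1 =>
      let '(ps, k') := flatten (Fresh k) e1 (S k) in
      (ps ++ [(X, [NT (Fresh k); NT X]); (X, [])], k')
  end.

Fixpoint flatten_rules (rs : list (N * expr T N)) (k : nat) : list fprod :=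
  match rs with
  | [] => []
  | (x, e) :: rs' =>
      let '(ps, k') := flatten (Top x) e k in ps ++ flatten_rules rs' k'
  end.

Definition flatG (rs : list (N * expr T N)) : list fprod := flatten_rules rs 0.

Definition nt_of (G : list fprod) (X : fnt N) : Prop :=
  exists p, In p G /\ (fst p = X \/ In (NT X) (snd p)).
Definition sym_of (G : list fprod) (s : fsym) : Prop :=
  exists p, In p G /\ (s = NT (fst p) \/ In s (snd p)).

Inductive hatnt : Type := Hat (X : fnt N).
Definition hsym := sym T hatnt.
Definition hat (s : fsym) : hsym :=
  match s with Term t => Term t | NT X => NT (Hat X) end.

Variable G : list fprod.
(* trig k : the fresh (CPS-eligible) nonterminal Fresh k is CPS-triggering;
   top-level nonterminals and terminals are never triggering. *)
Variable trig : nat -> bool.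

Definition isTrig (s : fsym) : bool :=
  match s with NT (Fresh k) => trig k | _ => false end.

(* The invocations performed by the CPS transformation:
   SymCall X tau       : CPSSym(X, tau) is invoked;
   ProdCall X eta j tau: CPSProd(X -> a_1..a_j . a_(j+1)..a_r, tau) is invoked,
                         where eta = a_1..a_r. *)
Inductive SymCall : fnt N -> list hsym -> Prop :=
| sc_init (X : fnt N) :
    nt_of G X -> isTrig (NT X) = false -> SymCall X []
| sc_call (X Y : fnt N) (eta : list fsym) (j : nat) (tau : list hsym) :
    ProdCall X eta (S j) tau ->
    nth_error eta j = Some (NT Y) -> isTrig (NT Y) = true ->
    ~ (S j = length eta /\ Y = X) ->
    SymCall Y tau
with ProdCall : fnt N -> list fsym -> nat -> list hsym -> Prop :=
| pc_start (X : fnt N) (eta : list fsym) (tau : list hsym) :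
    SymCall X tau -> In (X, eta) G -> ProdCall X eta (length eta) tau
| pc_nontrig (X : fnt N) (eta : list fsym) (j : nat) (tau : list hsym) (a : fsym) :
    ProdCall X eta (S j) tau ->
    nth_error eta j = Some a -> isTrig a = false ->
    ProdCall X eta j (hat a :: tau)
| pc_loop (X : fnt N) (eta : list fsym) (j : nat) (tau : list hsym) :
    ProdCall X eta (S j) tau ->
    nth_error eta j = Some (NT X) -> isTrig (NT X) = true ->
    S j = length eta ->
    ProdCall X eta j [hat (NT X)]
| pc_trig (X Y : fnt N) (eta : list fsym) (j : nat) (tau : list hsym) :
    ProdCall X eta (S j) tau ->
    nth_error eta j = Some (NT Y) -> isTrig (NT Y) = true ->
    ~ (S j = length eta /\ Y = X) ->
    ProdCall X eta j [hat (NT Y)].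

(* CPS(G): the production X^ -> tau is added when CPSProd is invoked
   with the dot at the start (i = 0). *)
Definition cpsG : hatnt -> list hsym -> Prop :=
  fun H tau => match H with Hat X => exists eta, ProdCall X eta 0 tau end.

(* tau_X: for a nonterminal, the argument of CPSSym(X, .); for a terminal, eps. *)
Definition TauX (s : fsym) (tau : list hsym) : Prop :=
  match s with Term _ => tau = [] | NT X => SymCall X tau end.

End Flatten.

(* Main.v *)
Require Import Defs.
From Stdlib Require Import List Arith Lia Classical.
Import ListNotations.

Section St.
Context {T N : Type}.

Fixpoint goCat (es : list (expr T N)) (k : nat) : list (fsym T N) * list (fprod T N) * nat :=
  match es with
  | [] => ([], [], k)
  | e1 :: es' =>
      match e1 with
      | ESym s =>
          let '(al, ps, k') := goCat es' k in (liftS s :: al, ps, k')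
      | _ =>
          let '(ps1, k1) := flatten (Fresh k) e1 (S k) in
          let '(al, ps, k') := goCat es' k1 in
          (NT (Fresh k) :: al, ps1 ++ ps, k')
      end
  end.

Definition goAlt (X : fnt N) := fix go (es : list (expr T N)) (k : nat) : list (fprod T N) * nat :=
  match es with
  | [] => ([], k)
  | e1 :: es' =>
      let '(ps1, k1) := flatten X e1 k in
      let '(ps, k') := go es' k1 in (ps1 ++ ps, k')
  end.

Lemma flatten_cat X es k : flatten X (ECat es) k =
  let '(al, ps, k') := goCat es k in (ps ++ [(X, al)], k').
Proof. reflexivity. Qed.

Lemma flatten_alt X es k : flatten X (EAlt es) k = goAlt X es k.
Proof. reflexivity. Qed.
End St.

Section Inv.
Context {T N : Type}.

Definition ltp (Y : fnt N) (m : nat) : Prop :=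
  match Y with Top _ => True | Fresh p => p < m end.

Definition Occ (ps : list (fprod T N)) m Y (eta : list (fsym T N)) j : Prop :=
  In (Y, eta) ps /\ nth_error eta j = Some (NT (Fresh m)) /\ ~ (S j = length eta /\ Y = Fresh m).

Definition rng (ps : list (fprod T N)) lo hi : Prop :=
  forall m Y eta j, Occ ps m Y eta j -> lo <= m < hi /\ ltp Y m.

Definition uniqO (ps : list (fprod T N)) : Prop :=
  forall m Y1 e1 j1 Y2 e2 j2, Occ ps m Y1 e1 j1 -> Occ ps m Y2 e2 j2 ->
    Y1 = Y2 /\ e1 = e2 /\ j1 = j2.

Definition Inv (r : list (fprod T N) * nat) k : Prop :=
  let '(ps, k') := r in k <= k' /\ rng ps k k' /\ uniqO ps.

Lemma Occ_app a b m Y e j : Occ (a ++ b) m Y e j -> Occ a m Y e j \/ Occ b m Y e j.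
Proof. intros [H1 [H2 H3]]. apply in_app_or in H1 as [H1|H1]; [left|right]; repeat split; auto. Qed.

Lemma Occ_appl a b m Y e j : Occ a m Y e j -> Occ (a ++ b) m Y e j.
Proof. intros [H1 [H2 H3]]. repeat split; auto. apply in_or_app; auto. Qed.
Lemma Occ_appr a b m Y e j : Occ b m Y e j -> Occ (a ++ b) m Y e j.
Proof. intros [H1 [H2 H3]]. repeat split; auto. apply in_or_app; auto. Qed.

Lemma rng_app a b lo hi : rng a lo hi -> rng b lo hi -> rng (a ++ b) lo hi.
Proof. intros Ha Hb m Y e j H. apply Occ_app in H as [H|H]; eauto. Qed.

Lemma rng_weak a lo hi lo' hi' : rng a lo hi -> lo' <= lo -> hi <= hi' -> rng a lo' hi'.
Proof. intros H ? ? m Y e j O. destruct (H _ _ _ _ O). split; auto; lia. Qed.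

Lemma uniq_app a b : uniqO a -> uniqO b ->
  (forall m Y1 e1 j1 Y2 e2 j2, Occ a m Y1 e1 j1 -> Occ b m Y2 e2 j2 -> False) -> uniqO (a ++ b).
Proof.
  intros Ha Hb D m Y1 e1 j1 Y2 e2 j2 O1 O2.
  apply Occ_app in O1 as [O1|O1]; apply Occ_app in O2 as [O2|O2]; eauto.
  exfalso; eauto. exfalso; eauto.
Qed.

Lemma liftS_not (s : sym T N) m : liftS s <> NT (Fresh m).
Proof. destruct s; simpl; discriminate. Qed.

Lemma Occ_one X al m Y e j : Occ [(X, al)] m Y e j ->
  Y = X /\ e = al /\ nth_error al j = Some (NT (Fresh m)) /\ ~ (S j = length al /\ X = Fresh m).
Proof. intros [[H|[]] [H2 H3]]. injection H as -> ->. auto. Qed.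

Lemma Occ_nil m Y e j : ~ Occ ([] : list (fprod T N)) m Y e j.
Proof. intros [[] _]. Qed.

Lemma ltp_mono X a b : ltp X a -> a <= b -> ltp X b.
Proof. destruct X; simpl; auto; lia. Qed.

Lemma rng_nil lo hi : rng ([] : list (fprod T N)) lo hi.
Proof. intros m Y e j O. destruct (Occ_nil _ _ _ _ O). Qed.
Lemma uniq_nil : uniqO ([] : list (fprod T N)).
Proof. intros m Y1 e1 j1 Y2 e2 j2 O. destruct (Occ_nil _ _ _ _ O). Qed.

Section EI.
Variable Pe : expr T N -> Prop.
Hypothesis HSym : forall s, Pe (ESym s).
Hypothesis HCat : forall es, Forall Pe es -> Pe (ECat es).
Hypothesis HAlt : forall es, Forall Pe es -> Pe (EAlt es).
Hypothesis HOpt : forall e, Pe e -> Pe (EOpt e).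
Hypothesis HStar : forall e, Pe e -> Pe (EStar e).
Fixpoint expr_ind' (e : expr T N) : Pe e :=
  match e with
  | ESym s => HSym s
  | ECat es => HCat es ((fix go (l : list (expr T N)) : Forall Pe l :=
                 match l with [] => Forall_nil _ | x :: l' => Forall_cons _ (expr_ind' x) (go l') end) es)
  | EAlt es => HAlt es ((fix go (l : list (expr T N)) : Forall Pe l :=
                 match l with [] => Forall_nil _ | x :: l' => Forall_cons _ (expr_ind' x) (go l') end) es)
  | EOpt e => HOpt e (expr_ind' e)
  | EStar e => HStar e (expr_ind' e)
  end.
End EI.

Definition FI (e : expr T N) := forall X k, ltp X k -> Inv (flatten X e k) k.

Definition CatInv (r : list (fsym T N) * list (fprod T N) * nat) k : Prop :=
  let '(al, ps, k') := r in k <= k' /\ rng ps k k' /\ uniqO ps /\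
    (forall i m, nth_error al i = Some (NT (Fresh m)) ->
       k <= m < k' /\ (forall Y e j, ~ Occ ps m Y e j) /\
       forall i', nth_error al i' = Some (NT (Fresh m)) -> i' = i).

Lemma goCat_inv es : Forall FI es -> forall k, CatInv (goCat es k) k.
Proof.
  induction 1 as [|e1 es' He1 Hes IH]; intros k.
  - simpl. split; [lia|]. split; [apply rng_nil|]. split; [apply uniq_nil|].
    intros [|i] m H; discriminate.
  - assert (Hgen : match e1 with ESym _ => True | _ =>
      goCat (e1 :: es') k = let '(ps1, k1) := flatten (Fresh k) e1 (S k) in
          let '(al, ps, k') := goCat es' k1 in (NT (Fresh k) :: al, ps1 ++ ps, k') end)
      by (destruct e1; auto).
    destruct e1 as [s| | | |].
    1: { simpl. specialize (IH k). destruct (goCat es' k) as [[al ps] k'].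
      destruct IH as (H1 & H2 & H3 & H4). split; auto. split; auto. split; auto.
      intros [|i] m Hi. simpl in Hi. injection Hi as Hi. destruct (liftS_not _ _ Hi).
      simpl in Hi. destruct (H4 _ _ Hi) as (A & B & C). split; auto. split; auto.
      intros [|i'] Hi'. simpl in Hi'. injection Hi' as Hi'. destruct (liftS_not _ _ Hi').
      f_equal. apply C; auto. }
    all: rewrite Hgen; clear Hgen;
      specialize (He1 (Fresh k) (S k) ltac:(simpl; lia));
      destruct (flatten _ _ (S k)) as [ps1 k1];
      destruct He1 as (G1 & G2 & G3);
      specialize (IH k1); destruct (goCat es' k1) as [[al ps] k'];
      destruct IH as (H1 & H2 & H3 & H4);
      (split; [lia|]);
      (split; [apply rng_app; eapply rng_weak; eauto; lia|]);
      (split; [apply uniq_app; auto; intros m ? ? ? ? ? ? O1 O2;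
               destruct (G2 _ _ _ _ O1); destruct (H2 _ _ _ _ O2); lia|]);
      intros [|i] m Hi;
      [ simpl in Hi; injection Hi as <-; split; [lia|]; split;
        [ intros Y e j O; apply Occ_app in O as [O|O];
          [destruct (G2 _ _ _ _ O); lia | destruct (H2 _ _ _ _ O); lia]
        | intros [|i'] Hi'; auto; simpl in Hi'; destruct (H4 _ _ Hi') as [? _]; lia ]
      | simpl in Hi; destruct (H4 _ _ Hi) as (A & B & C); split; [lia|]; split;
        [ intros Y e j O; apply Occ_app in O as [O|O];
          [destruct (G2 _ _ _ _ O); lia | eapply B; eauto]
        | intros [|i'] Hi'; simpl in Hi';
          [injection Hi' as Hi'; subst; lia | f_equal; apply C; auto] ] ].
Qed.

Lemma goAlt_inv es : Forall FI es -> forall X k, ltp X k -> Inv (goAlt X es k) k.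
Proof.
  induction 1 as [|e1 es' He1 Hes IH]; intros X k HX.
  - simpl. split; [lia|]. split; [apply rng_nil|apply uniq_nil].
  - change (Inv (let '(ps1,k1) := flatten X e1 k in let '(ps,k') := goAlt X es' k1 in (ps1++ps,k')) k).
    specialize (He1 X k HX). destruct (flatten X e1 k) as [ps1 k1].
    destruct He1 as (G1 & G2 & G3).
    specialize (IH X k1 (ltp_mono _ _ _ HX G1)). destruct (goAlt X es' k1) as [ps k'].
    destruct IH as (H1 & H2 & H3).
    split; [lia|]. split; [apply rng_app; eapply rng_weak; eauto; lia|].
    apply uniq_app; auto. intros m ? ? ? ? ? ? O1 O2.
    destruct (G2 _ _ _ _ O1); destruct (H2 _ _ _ _ O2); lia.
Qed.

Lemma flatten_inv : forall e, FI e.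
Proof.
  apply expr_ind'.
  - intros s X k HX. simpl. split; auto. split.
    + intros m Y e j O. apply Occ_one in O as (_ & -> & Hn & _).
      destruct j as [|[|]]; simpl in Hn; try discriminate. injection Hn as Hn. destruct (liftS_not _ _ Hn).
    + intros m Y1 e1 j1 Y2 e2 j2 O. apply Occ_one in O as (_ & -> & Hn & _).
      destruct j1 as [|[|]]; simpl in Hn; try discriminate. injection Hn as Hn. destruct (liftS_not _ _ Hn).
  - intros es Hes X k HX. rewrite flatten_cat.
    pose proof (goCat_inv _ Hes k) as G. destruct (goCat es k) as [[al ps] k'].
    destruct G as (H1 & H2 & H3 & H4). split; auto. split.
    + apply rng_app; auto. intros m Y e j O. apply Occ_one in O as (-> & -> & Hn & _).
      destruct (H4 _ _ Hn) as [? _]. split; auto. eapply ltp_mono; eauto. lia.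
    + apply uniq_app; auto.
      * intros m Y1 e1 j1 Y2 e2 j2 O1 O2. apply Occ_one in O1 as (-> & -> & Hn1 & _).
        apply Occ_one in O2 as (-> & -> & Hn2 & _). split; auto. split; auto.
        destruct (H4 _ _ Hn1) as (_ & _ & C). symmetry; apply C; auto.
      * intros m Y1 e1 j1 Y2 e2 j2 O1 O2. apply Occ_one in O2 as (-> & -> & Hn2 & _).
        destruct (H4 _ _ Hn2) as (_ & B & _). eapply B; eauto.
  - intros es Hes X k HX. rewrite flatten_alt. apply (goAlt_inv _ Hes); auto.
  - intros e He X k HX. simpl. specialize (He X k HX). destruct (flatten X e k) as [ps k'].
    destruct He as (H1 & H2 & H3). split; auto. split.
    + apply rng_app; auto. intros m Y e0 j O. apply Occ_one in O as (-> & -> & Hn & _).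
      destruct j; discriminate.
    + apply uniq_app; auto.
      * intros m Y1 e1 j1 Y2 e2 j2 O1 O2. apply Occ_one in O1 as (-> & -> & Hn1 & _).
        destruct j1; discriminate.
      * intros m Y1 e1 j1 Y2 e2 j2 O1 O2. apply Occ_one in O2 as (-> & -> & Hn2 & _).
        destruct j2; discriminate.
  - intros e He X k HX. simpl. specialize (He (Fresh k) (S k) ltac:(simpl; lia)).
    destruct (flatten (Fresh k) e (S k)) as [ps k'].
    destruct He as (H1 & H2 & H3).
    assert (Hst : forall m Y e0 j, Occ [(X, [NT (Fresh k); NT X]); (X, [])] m Y e0 j ->
              Y = X /\ e0 = [NT (Fresh k); NT X] /\ j = 0 /\ m = k).
    { intros m Y e0 j [Hin [Hn Hs]]. destruct Hin as [Hin|[Hin|[]]]; injection Hin as <- <-.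
      - destruct j as [|[|[|]]]; simpl in Hn; try discriminate.
        + injection Hn as ->. auto.
        + injection Hn as ->. exfalso; apply Hs; auto.
      - destruct j; discriminate. }
    split; [lia|]. split.
    + apply rng_app. eapply rng_weak; eauto; lia.
      intros m Y e0 j O. apply Hst in O as (-> & -> & -> & ->). split; [lia|]. auto.
    + apply uniq_app; auto.
      * intros m Y1 e1 j1 Y2 e2 j2 O1 O2. apply Hst in O1 as (-> & -> & -> & ->).
        apply Hst in O2 as (-> & -> & -> & _). auto.
      * intros m Y1 e1 j1 Y2 e2 j2 O1 O2. apply Hst in O2 as (-> & -> & -> & ->).
        destruct (H2 _ _ _ _ O1). lia.
Qed.

Lemma rules_inv rs k : (forall m Y e j, Occ (flatten_rules rs k) m Y e j -> k <= m /\ ltp Y m)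
   /\ uniqO (flatten_rules rs k).
Proof.
  revert k. induction rs as [|[x e] rs IH]; intros k.
  - simpl. split. intros m Y e j O; destruct (Occ_nil _ _ _ _ O). apply uniq_nil.
  - simpl. pose proof (flatten_inv e (Top x) k I) as F. destruct (flatten (Top x) e k) as [ps k'].
    destruct F as (H1 & H2 & H3). destruct (IH k') as [R U]. split.
    + intros m Y e0 j O. apply Occ_app in O as [O|O].
      destruct (H2 _ _ _ _ O); split; auto; lia. destruct (R _ _ _ _ O); split; auto; lia.
    + apply uniq_app; auto. intros m ? ? ? ? ? ? O1 O2. destruct (H2 _ _ _ _ O1); destruct (R _ _ _ _ O2); lia.
Qed.
End Inv.

Section Deriv.
Context {T N : Type} (P : N -> list (sym T N) -> Prop).

Lemma step_app_r u w v : step P u w -> step P (u ++ v) (w ++ v).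
Proof. destruct 1. rewrite <- !app_assoc. simpl. constructor; auto. Qed.

Lemma step_app_l u w v : step P u w -> step P (v ++ u) (v ++ w).
Proof. destruct 1. rewrite (app_assoc v u (NT A :: v0)), (app_assoc v u (beta ++ v0)). constructor; auto. Qed.

Lemma der_app_r n u w v : derivesn P n u w -> derivesn P n (u ++ v) (w ++ v).
Proof. induction 1. constructor. econstructor; [apply step_app_r; eauto|eauto]. Qed.

Lemma der_app_l n u w v : derivesn P n u w -> derivesn P n (v ++ u) (v ++ w).
Proof. induction 1. constructor. econstructor; [apply step_app_l; eauto|eauto]. Qed.

Lemma der_trans n m u v w : derivesn P n u v -> derivesn P m v w -> derivesn P (n+m) u w.
Proof. induction 1; intros; simpl; auto. econstructor; eauto. Qed.

Lemma no_step_term l w : ~ step P (map Term l) w.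
Proof.
  intros H. inversion H as [u v A beta _ E1 E2].
  symmetry in E1; apply map_eq_app in E1 as (l1 & l2 & _ & _ & E).
  destruct l2; simpl in E; discriminate.
Qed.

Lemma der_term n l w : derivesn P n (map Term l) w -> n = 0 /\ w = map Term l.
Proof.
  intros H. inversion H; subst; auto. exfalso; eapply no_step_term; eauto.
Qed.

Lemma step_app_inv u v x : step P (u ++ v) x ->
  exists u' v', x = u' ++ v' /\ ((step P u u' /\ v' = v) \/ (u' = u /\ step P v v')).
Proof.
  intros H. inversion H as [p s A beta HP E1 E2]; subst. symmetry in E1.
  apply app_eq_app in E1 as (l & [[E3 E4]|[E3 E4]]).
  - subst u. destruct l as [|y l].
    + simpl in E4. subst v. exists p, (beta ++ s). rewrite app_nil_r. split; auto.
      right. split; auto. rewrite <- (app_nil_l (NT A :: s)). rewrite <- (app_nil_l (beta ++ s)).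
      constructor; auto.
    + simpl in E4. injection E4 as E5 E6. subst y s.
      exists (p ++ beta ++ l), v. split. rewrite <- !app_assoc. reflexivity.
      left. split; auto. constructor; auto.
  - subst. exists u, (l ++ beta ++ s). split. rewrite <- !app_assoc. reflexivity.
    right. split; auto. constructor; auto.
Qed.

Lemma der_split n u v lam : derivesn P n (u ++ v) (map Term lam) ->
  exists n1 n2 l1 l2, n = n1 + n2 /\ lam = l1 ++ l2 /\
    derivesn P n1 u (map Term l1) /\ derivesn P n2 v (map Term l2).
Proof.
  revert u v lam. induction n; intros u v lam H.
  - inversion H; subst. match goal with Hx : _ ++ _ = map _ _ |- _ => symmetry in Hx; apply map_eq_app in Hx as (l1 & l2 & E & E1 & E2) end.
    exists 0, 0, l1, l2. subst. repeat split; constructor.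
  - inversion H as [|n0 u0 x w0 S0 D0]; subst. apply step_app_inv in S0 as (u' & v' & -> & [[S1 ->]|[-> S1]]);
    destruct (IHn _ _ _ D0) as (n1 & n2 & l1 & l2 & En & El & D1 & D2).
    + exists (S n1), n2, l1, l2. repeat split; auto; try lia. econstructor; eauto.
    + exists n1, (S n2), l1, l2. repeat split; auto; try lia. econstructor; eauto.
Qed.

Lemma der_single n A w : derivesn P n [NT A] w -> n = 0 /\ w = [NT A] \/
  exists n' beta, n = S n' /\ P A beta /\ derivesn P n' beta w.
Proof.
  intros H. inversion H; subst; auto. right. inversion H0 as [p s A' beta HP E1 E2]; subst.
  destruct p as [|? [|]]; simpl in E1; try discriminate.
  injection E1 as -> ->. rewrite app_nil_r in H1. simpl in H1. eauto.
Qed.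

Lemma der_one n A beta w : P A beta -> derivesn P n beta w -> derivesn P (S n) [NT A] w.
Proof.
  intros. econstructor; [|eassumption].
  rewrite <- (app_nil_l [NT A]), <- (app_nil_r beta), <- (app_nil_l (beta ++ [])).
  constructor; auto.
Qed.
End Deriv.

Section C.
Context {T N : Type} (G : list (fprod T N)) (trig : nat -> bool).
Hypothesis Hltp : forall m Y e j, Occ G m Y e j -> ltp Y m.
Hypothesis HU : uniqO G.

Lemma nth_len {A} (l : list A) n x : nth_error l n = Some x -> n < length l.
Proof. intros H. apply nth_error_Some. congruence. Qed.

Lemma PC_in X eta j t : ProdCall G trig X eta j t -> In (X, eta) G /\ j <= length eta.
Proof. induction 1; intuition lia. Qed.

Lemma PC_det X : (forall t1 t2, SymCall G trig X t1 -> SymCall G trig X t2 -> t1 = t2) ->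
  forall eta j t1 t2, ProdCall G trig X eta j t1 -> ProdCall G trig X eta j t2 -> t1 = t2.
Proof.
  intros HS eta j t1 t2 H1. revert t2. induction H1; intros t2 K2;
  inversion K2; subst;
  repeat match goal with
    | E1 : nth_error ?l ?j = Some ?a, E2 : nth_error ?l ?j = Some ?b |- _ =>
        rewrite E1 in E2; injection E2; intros; subst; clear E2
    | E : nth_error ?l (length ?l) = Some _ |- _ => apply nth_len in E; lia
    end;
  try congruence; try (exfalso; intuition; fail); auto.
  all: try (f_equal; auto).
Qed.

Definition meas (X : fnt N) := match X with Top _ => 0 | Fresh p => S p end.

Lemma SC_occ X0 Y eta j tau : ProdCall G trig X0 eta (S j) tau ->
  nth_error eta j = Some (NT Y) -> isTrig (T:=T) trig (NT Y) = true ->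
  ~ (S j = length eta /\ Y = X0) ->
  exists m, Y = Fresh m /\ Occ G m X0 eta j.
Proof.
  intros HP Hn Ht Hs. destruct Y as [y|m]; simpl in Ht; try discriminate.
  exists m. split; auto. split; [apply (PC_in _ _ _ _ HP)|]. split; auto.
  intros [E1 E2]. apply Hs; auto.
Qed.

Lemma SC_unique_n n : forall X, meas X < n -> forall t1 t2,
  SymCall G trig X t1 -> SymCall G trig X t2 -> t1 = t2.
Proof.
  induction n; intros X HX t1 t2 S1 S2. lia.
  inversion S1; subst; inversion S2; subst; try congruence.
  destruct (SC_occ _ _ _ _ _ H H0 H1 H2) as (m & -> & O1).
  destruct (SC_occ _ _ _ _ _ H3 H4 H5 H6) as (m' & E & O2). injection E as <-.
  destruct (HU _ _ _ _ _ _ _ O1 O2) as (<- & <- & <-).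
  eapply PC_det; [|eassumption|eassumption].
  apply IHn. apply Hltp in O1. simpl in HX. destruct X0; simpl in *; lia.
Qed.

Lemma SC_unique X t1 t2 : SymCall G trig X t1 -> SymCall G trig X t2 -> t1 = t2.
Proof. apply (SC_unique_n (S (meas X))). lia. Qed.

Lemma PC_down X eta j t : ProdCall G trig X eta (S j) t -> exists t', ProdCall G trig X eta j t'.
Proof.
  intros H. destruct (PC_in _ _ _ _ H) as [_ Hl].
  destruct (nth_error eta j) as [a|] eqn:E; [|apply nth_error_None in E; lia].
  destruct (isTrig trig a) eqn:Ht.
  - destruct a as [x|Y]; [discriminate|].
    destruct (classic (S j = length eta /\ Y = X)) as [[E1 ->]|NE].
    + eexists; eapply pc_loop; eauto.
    + eexists; eapply pc_trig; eauto.
  - eexists; eapply pc_nontrig; eauto.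
Qed.

Lemma PC_zero X eta t : SymCall G trig X t -> In (X, eta) G -> exists t0, ProdCall G trig X eta 0 t0.
Proof.
  intros HS Hin. assert (H : forall k, k <= length eta -> exists t', ProdCall G trig X eta (length eta - k) t').
  { induction k; intros Hk. rewrite Nat.sub_0_r. eexists; constructor; eauto.
    destruct IHk as [t' Ht']. lia. replace (length eta - k) with (S (length eta - S k)) in Ht' by lia.
    eapply PC_down; eauto. }
  destruct (H (length eta) (le_n _)) as [t0 Ht0]. rewrite Nat.sub_diag in Ht0. eauto.
Qed.

Definition P1 n := forall (s : fsym T N) tau lam, TauX G trig s tau ->
  derivesn (prods_of G) n [s] (map Term lam) ->
  derivesn (cpsG G trig) n [hat s] (map Term lam ++ tau).
Definition P2 n := forall X eta j tauPi tauX lam,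
  ProdCall G trig X eta j tauPi -> SymCall G trig X tauX ->
  derivesn (prods_of G) n (skipn j eta) (map Term lam) ->
  derivesn (cpsG G trig) n tauPi (map Term lam ++ tauX).

Lemma skipn_cons {A} (l : list A) j a : nth_error l j = Some a -> skipn j l = a :: skipn (S j) l.
Proof. revert l; induction j; intros [|x l] H; simpl in *; try discriminate. congruence. auto. Qed.

Lemma map_nil_inv (lam : list T) : map (@Term T (fnt N)) lam = [] -> lam = [].
Proof. destruct lam; simpl; congruence. Qed.

Lemma main_all n : P1 n /\ P2 n.
Proof.
  induction n as [n IH] using lt_wf_ind.
  assert (H1 : P1 n).
  { intros s tau lam HT D. destruct s as [t|Y].
    - simpl in HT; subst. change [Term t] with (map (@Term T (fnt N)) [t]) in D.
      apply der_term in D as [-> E]. destruct lam as [|x [|]]; simpl in E; try discriminate. injection E as ->. simpl. constructor.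
    - simpl in HT. apply der_single in D as [[-> E]|(n' & beta & -> & Hp & D')].
      + destruct lam as [|x [|]]; discriminate.
      + destruct (PC_zero _ _ _ HT Hp) as [t0 Ht0]. simpl.
        apply der_one with t0. exists beta; auto.
        apply (proj2 (IH n' (Nat.lt_succ_diag_r n')) Y beta 0 t0 tau lam Ht0 HT D'). }
  split; auto.
  assert (H1n : forall n', n' <= n -> P1 n').
  { intros n' Hn'. destruct (Nat.eq_dec n' n) as [->|]; auto. apply IH; lia. }
  assert (Aux : forall k n', n' <= n -> forall X eta j tauPi tauX lam, length eta - j = k ->
    ProdCall G trig X eta j tauPi -> SymCall G trig X tauX ->
    derivesn (prods_of G) n' (skipn j eta) (map Term lam) ->
    derivesn (cpsG G trig) n' tauPi (map Term lam ++ tauX)).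
  { induction k as [|k IHk]; intros n' Hn' X eta j tauPi tauX lam Hk HP HS D;
    destruct (PC_in _ _ _ _ HP) as [Hin Hj].
    - assert (Ej : j = length eta) by lia. subst j. rewrite skipn_all in D.
      change [] with (map (@Term T (fnt N)) []) in D. apply der_term in D as [-> E].
      apply map_nil_inv in E. subst lam. simpl.
      inversion HP; subst;
        try match goal with E : nth_error ?l (length ?l) = Some _ |- _ => apply nth_len in E; lia end.
      rewrite (SC_unique _ _ _ HS H). constructor.
    - destruct (nth_error eta j) as [a|] eqn:Ea; [|apply nth_error_None in Ea; lia].
      rewrite (skipn_cons _ _ _ Ea) in D. change (a :: skipn (S j) eta) with ([a] ++ skipn (S j) eta) in D.
      apply der_split in D as (n1 & n2 & l1 & l2 & -> & -> & D1 & D2).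
      rewrite map_app, <- app_assoc.
      inversion HP; subst.
      + lia.
      + match goal with Hx : ProdCall G trig X eta (S j) ?t |- _ => rename Hx into HP'; rename t into tau' end.
        match goal with Hx : nth_error eta j = Some ?b |- _ => rewrite Ea in Hx; injection Hx; intros; subst b end.
        assert (TA : TauX G trig a []).
        { destruct a as [t|Y]; simpl; auto. apply sc_init; auto. exists (X, eta); split; auto.
          right; simpl; eapply nth_error_In; eauto. }
        pose proof (H1n n1 ltac:(lia) a [] l1 TA D1) as C1. rewrite app_nil_r in C1.
        pose proof (IHk n2 ltac:(lia) X eta (S j) tau' tauX l2 ltac:(lia) HP' HS D2) as C2.
        apply der_app_r with (v:=tau') in C1. apply der_app_l with (v := map Term l1) in C2.
        exact (der_trans _ _ _ _ _ _ C1 C2).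
      + match goal with Hx : nth_error eta j = Some (NT X) |- _ => rewrite Ea in Hx; injection Hx; intros; subst a end.
        match goal with Hx : S j = length eta |- _ => rewrite Hx, skipn_all in D2 end.
        change [] with (map (@Term T (fnt N)) []) in D2. apply der_term in D2 as [-> E].
        apply map_nil_inv in E. subst l2.
        pose proof (H1n n1 ltac:(lia) (NT X) tauX l1 HS D1) as C1.
        rewrite Nat.add_0_r. exact C1.
      + match goal with Hx : ProdCall G trig X eta (S j) ?t |- _ => rename Hx into HP'; rename t into tau' end.
        match goal with Hx : nth_error eta j = Some (NT ?b) |- _ => rewrite Ea in Hx; injection Hx; intros; subst a end.
        assert (SY : SymCall G trig Y tau') by (eapply sc_call; eauto).
        pose proof (H1n n1 ltac:(lia) (NT Y) tau' l1 SY D1) as C1.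
        pose proof (IHk n2 ltac:(lia) X eta (S j) tau' tauX l2 ltac:(lia) HP' HS D2) as C2.
        apply der_app_l with (v := map Term l1) in C2.
        exact (der_trans _ _ _ _ _ _ C1 C2). }
  intros X eta j tauPi tauX lam HP HS D. eapply Aux; eauto.
Qed.
End C.

Theorem mainTheorem1 (T N : Type) (rules : list (N * expr T N)) (trig : nat -> bool) :
  let G := flatG rules in
  (forall (s : fsym T N) (tau : list (hsym T N)) (lam : list T) (n : nat),
      sym_of G s -> TauX G trig s tau ->
      derivesn (prods_of G) n [s] (map Term lam) ->
      derivesn (cpsG G trig) n [hat s] (map Term lam ++ tau))
  /\
  (forall (X : fnt N) (eta : list (fsym T N)) (j : nat)
          (tauPi tauX : list (hsym T N)) (lam : list T) (n : nat),
      In (X, eta) G -> j <= length eta ->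
      ProdCall G trig X eta j tauPi -> SymCall G trig X tauX ->
      derivesn (prods_of G) n (skipn j eta) (map Term lam) ->
      derivesn (cpsG G trig) n tauPi (map Term lam ++ tauX)).
Proof.
  intros G. destruct (rules_inv rules 0) as [R U].
  assert (Hl : forall m Y e j, Occ G m Y e j -> ltp Y m) by (intros; eapply R; eauto).
  split.
  - intros s tau lam n _ HT D. exact (proj1 (main_all G trig Hl U n) s tau lam HT D).
  - intros X eta j tauPi tauX lam n _ _ HP HS D. exact (proj2 (main_all G trig Hl U n) X eta j tauPi tauX lam HP HS D).
Qed.
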